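(* Let $n\le l$ be positive integers, let $L_l=\{a_1<\dots<a_l\}$ be the linearly ordered semilattice of $l$ elements, and let $t(X)=s(X)$ be an equation over $L_l$ in the variables $X=\{x_1,\dots,x_n\}$ in which every variable occurs. If $\sigma\ne\sigma'$ are two distinct permutations of $\{1,\dots,n\}$, each of the first or second kind with respect to $t(X)=s(X)$, then $Y_\sigma\not\subseteq Y_{\sigma'}$.
   Context: $L_l$ has multiplication $a_ia_j=a_{\min(i,j)}$. A term is a commutative word in $x_1,\dots,x_n$; $\mathrm{Var}(t)$ is the set of variables occurring in $t$. An equation is an ordered pair of terms $t(X)=s(X)$; $P\in L_l^n$ is a solution if $t(P)=s(P)$; $x\le y$ abbreviates $xy=x$. For a system $S$, $V(S)\subseteq L_l^n$ is its set of common solutions. A permutation $\sigma$ of $\{1,\dots,n\}$ is of the first kind if $x_{\sigma(1)}\in\mathrm{Var}(t)\cap\mathrm{Var}(s)$, and of the second kind if $x_{\sigma(1)}\in\mathrm{Var}(s)\setminus\mathrm{Var}(t)$ and $x_{\sigma(2)}\in\mathrm{Var}(t)\setminus\mathrm{Var}(s)$. For $\sigma$ of the first kind, $Y_\sigma=V(\{x_{\sigma(i)}\le x_{\sigma(i+1)}:1\le i\le n-1\})$; for $\sigma$ of the second kind, $Y_\sigma=V(\{x_{\sigma(1)}=x_{\sigma(2)}\}\cup\{x_{\sigma(i)}\le x_{\sigma(i+1)}:2\le i\le n-1\})$. *)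

(* Defs.v *)
From mathcomp Require Import all_boot all_order all_fingroup.
Set Implicit Arguments. Unset Strict Implicit. Unset Printing Implicit Defensive.

(* L_l = {a_1 < ... < a_l} is modelled by 'I_l (a_{i+1} <-> i), with
   multiplication a_i a_j = a_{min(i,j)}. *)
Definition Lmul (l : nat) (a b : 'I_l) : 'I_l := if (val a <= val b)%N then a else b.

(* A term: a (nonempty) commutative word in x_1..x_n (variable x_{i+1} <-> i : 'I_n),
   given as its first letter and the remaining letters. *)
Definition term (n : nat) : Type := ('I_n * seq 'I_n)%type.

Definition Var (n : nat) (t : term n) : {set 'I_n} := [set i | i \in t.1 :: t.2].

Definition tval (n l : nat) (P : {ffun 'I_n -> 'I_l}) (t : term n) : 'I_l :=
  foldl (@Lmul l) (P t.1) (map P t.2).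

Definition equation (n : nat) : Type := (term n * term n)%type.

Definition V (n l : nat) (S : seq (equation n)) : {set {ffun 'I_n -> 'I_l}} :=
  [set P | all (fun e : equation n => tval P e.1 == tval P e.2) S].

(* Equations x_i = x_j and x_i <= x_j (i.e. x_i x_j = x_i). *)
Definition eq_var (n : nat) (i j : 'I_n) : equation n := ((i, [::]), (j, [::])).
Definition le_var (n : nat) (i j : 'I_n) : equation n := ((i, [:: j]), (i, [::])).

(* Positions are 0-based: position k stands for the paper's index k+1. *)
Definition first_kind (n : nat) (t s : term n) (sg : {perm 'I_n}) : bool :=
  [exists i : 'I_n, (val i == 0%N) && (sg i \in Var t :&: Var s)].

Definition second_kind (n : nat) (t s : term n) (sg : {perm 'I_n}) : bool :=
  [exists i : 'I_n, exists j : 'I_n,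
     [&& val i == 0%N, val j == 1%N, sg i \in Var s :\: Var t & sg j \in Var t :\: Var s]].

(* {x_{sg(i)} <= x_{sg(i+1)} : start <= i <= n-1} (paper indices), i.e. 0-based
   positions p with start-1 <= p and p+1 < n. *)
Definition chain_sys (n : nat) (sg : {perm 'I_n}) (start : nat) : seq (equation n) :=
  flatten [seq [seq le_var (sg p) (sg q) | q <- enum 'I_n & val q == (val p).+1]
          | p <- enum 'I_n & (start <= (val p).+1)%N].

Definition Y1 (n l : nat) (sg : {perm 'I_n}) : {set {ffun 'I_n -> 'I_l}} :=
  V l (chain_sys sg 1).

Definition Y2 (n l : nat) (sg : {perm 'I_n}) : {set {ffun 'I_n -> 'I_l}} :=
  V l (flatten [seq [seq eq_var (sg p) (sg q) | q <- enum 'I_n & val q == 1%N]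
               | p <- enum 'I_n & val p == 0%N] ++ chain_sys sg 2).

(* Y_sigma: Y1 for permutations of the first kind, Y2 otherwise
   (used only for permutations of the first or second kind). *)
Definition Ysig (n l : nat) (t s : term n) (sg : {perm 'I_n}) : {set {ffun 'I_n -> 'I_l}} :=
  if first_kind t s sg then Y1 l sg else Y2 l sg.

(* Main.v *)
Require Import Defs.
From mathcomp Require Import all_boot all_order all_fingroup.
Set Implicit Arguments. Unset Strict Implicit. Unset Printing Implicit Defensive.

Lemma Lmul_eq l (a b : 'I_l) : (Lmul a b == a) = (val a <= val b)%N.
Proof.
rewrite /Lmul; case: leqP => h; first by rewrite eqxx.
by apply/negbTE/eqP => E; move: h; rewrite E ltnn.
Qed.

Lemma chainP n l (sg : {perm 'I_n}) st (P : {ffun 'I_n -> 'I_l}) :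
  all (fun e : equation n => Defs.tval P e.1 == Defs.tval P e.2) (chain_sys sg st) =
  [forall p : 'I_n, forall q : 'I_n, ((st <= (val p).+1)%N && (val q == (val p).+1))
      ==> (val (P (sg p)) <= val (P (sg q)))%N].
Proof.
apply/allP/forallP.
- move=> H p; apply/forallP => q; apply/implyP => /andP[h1 h2].
  have := H (le_var (sg p) (sg q)); rewrite /Defs.tval /= Lmul_eq; apply.
  apply/flattenP.
  exists [seq le_var (sg p) (sg q) | q <- enum 'I_n & val q == (val p).+1].
    by apply/mapP; exists p => //; rewrite mem_filter h1 mem_enum.
  by apply/mapP; exists q => //; rewrite mem_filter h2 mem_enum.
- move=> H e /flattenP [s' /mapP [p hp ->] /mapP [q hq ->]].
  move: hp hq; rewrite !mem_filter => /andP[hp _] /andP[hq _].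
  move: (H p) => /forallP/(_ q)/implyP; rewrite /Defs.tval /= Lmul_eq; apply.
  by rewrite hp hq.
Qed.

Lemma Y1P n l (sg : {perm 'I_n}) (P : {ffun 'I_n -> 'I_l}) :
  (P \in Y1 l sg) =
  [forall p : 'I_n, forall q : 'I_n, ((1 <= (val p).+1)%N && (val q == (val p).+1))
      ==> (val (P (sg p)) <= val (P (sg q)))%N].
Proof. by rewrite inE chainP. Qed.

Lemma Y2P n l (sg : {perm 'I_n}) (P : {ffun 'I_n -> 'I_l}) :
  (P \in Y2 l sg) =
  [forall p : 'I_n, forall q : 'I_n, ((val p == 0%N) && (val q == 1%N))
      ==> (P (sg p) == P (sg q))] &&
  [forall p : 'I_n, forall q : 'I_n, ((2 <= (val p).+1)%N && (val q == (val p).+1))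
      ==> (val (P (sg p)) <= val (P (sg q)))%N].
Proof.
rewrite inE all_cat chainP; congr (_ && _).
apply/allP/forallP.
- move=> H p; apply/forallP => q; apply/implyP => /andP[h1 h2].
  have := H (eq_var (sg p) (sg q)); rewrite /Defs.tval /=; apply.
  apply/flattenP.
  exists [seq eq_var (sg p) (sg q) | q <- enum 'I_n & val q == 1%N].
    by apply/mapP; exists p => //; rewrite mem_filter h1 mem_enum.
  by apply/mapP; exists q => //; rewrite mem_filter h2 mem_enum.
- move=> H e /flattenP [s' /mapP [p hp ->] /mapP [q hq ->]].
  move: hp hq; rewrite !mem_filter => /andP[hp _] /andP[hq _].
  move: (H p) => /forallP/(_ q)/implyP; rewrite /Defs.tval /=; apply.
  by rewrite hp hq.
Qed.

Lemma mono_gen n (h : 'I_n -> nat) st :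
  (forall p q : 'I_n, (st <= (val p).+1)%N -> val q = (val p).+1 -> (h p <= h q)%N) ->
  forall a b : 'I_n, (st <= (val a).+1)%N -> (val a <= val b)%N -> (h a <= h b)%N.
Proof.
move=> H a b ha hab.
have [d hd] : exists d, val b = (val a + d)%N by exists (val b - val a)%N; rewrite subnKC.
elim: d b hd {hab} => [|d IH] b hd.
  by have -> : b = a by apply: val_inj; rewrite hd addn0.
have hc : (val a + d < n)%N by apply: leq_trans (ltn_ord b); rewrite hd addnS.
apply: leq_trans (IH (Ordinal hc) erefl) _.
apply: H => /=; first by apply: leq_trans ha _; rewrite ltnS leq_addr.
by rewrite hd addnS.
Qed.

Lemma perm_mono_id n (f : {perm 'I_n}) :
  (forall p q : 'I_n, val q = (val p).+1 -> (val (f p) <= val (f q))%N) ->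
  forall x, f x = x.
Proof.
move=> H.
have M := @mono_gen n (fun x => val (f x)) 0 (fun p q _ e => H p q e).
suff: forall k (x : 'I_n), val x = k -> f x = x by move=> S x; exact: S _ _ erefl.
elim/ltn_ind => k IH x xk.
have ge : (val x <= val (f x))%N.
  rewrite leqNgt; apply/negP => lt.
  have := IH (val (f x)) _ (f x) erefl; rewrite -xk => /(_ lt) /perm_inj E.
  by move: lt; rewrite E ltnn.
set m := ((f^-1)%g x).
have fm : f m = x by rewrite /m permKV.
have ge2 : (val x <= val m)%N.
  rewrite leqNgt; apply/negP => lt.
  have := IH (val m) _ m erefl; rewrite -xk => /(_ lt); rewrite fm => E.
  by move: lt; rewrite -E ltnn.
apply: val_inj; apply/eqP; rewrite eqn_leq ge andbT.
by rewrite -{2}fm; apply: M.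
Qed.

Definition pt1 n l (H : (n <= l)%N) (sg : {perm 'I_n}) : {ffun 'I_n -> 'I_l} :=
  [ffun x => Ordinal (leq_trans (ltn_ord ((sg^-1)%g x)) H)].
Definition pt2 n l (H : (n <= l)%N) (sg : {perm 'I_n}) : {ffun 'I_n -> 'I_l} :=
  [ffun x => Ordinal (leq_ltn_trans (leq_pred (val ((sg^-1)%g x))) (leq_trans (ltn_ord ((sg^-1)%g x)) H))].

Lemma pt1E n l (H : (n <= l)%N) sg x : val (pt1 H sg x) = val ((sg^-1)%g x).
Proof. by rewrite ffunE. Qed.
Lemma pt2E n l (H : (n <= l)%N) sg x : val (pt2 H sg x) = (val ((sg^-1)%g x)).-1.
Proof. by rewrite ffunE. Qed.

Lemma pred_mono a b : (0 < a)%N -> (0 < b)%N -> (a.-1 <= b.-1)%N -> (a <= b)%N.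
Proof. by case: a b => [|a] [|b]. Qed.

Lemma perm_eq_of n (sg sg' : {perm 'I_n}) :
  (forall x, (sg' * sg^-1)%g x = x) -> sg = sg'.
Proof.
move=> F; apply/permP => x; have := F x; rewrite permM => E.
by rewrite -{1}E permKV.
Qed.

Theorem lemma3 (n l : nat) (t s : term n) (sg sg' : {perm 'I_n}) :
  (0 < n)%N -> (n <= l)%N ->
  Var t :|: Var s = [set: 'I_n] ->
  sg != sg' ->
  first_kind t s sg || second_kind t s sg ->
  first_kind t s sg' || second_kind t s sg' ->
  ~~ (Ysig l t s sg \subset Ysig l t s sg').
Proof.
move=> n0 nl _ neq k1 k2; rewrite /Ysig; apply/negP => /subsetP Hsub.
case fk: (first_kind t s sg).
- have mem : pt1 nl sg \in Y1 l sg.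
    rewrite Y1P; apply/forallP => p; apply/forallP => q; apply/implyP => /andP[_ /eqP e].
    by rewrite !pt1E !permK e.
  rewrite fk in Hsub; move: (Hsub _ mem); case fk': (first_kind t s sg').
  + rewrite Y1P => H; move/negP: neq; apply; apply/eqP/perm_eq_of.
    apply: perm_mono_id => p q e; rewrite !permM.
    move: H => /forallP/(_ p)/forallP/(_ q)/implyP; rewrite !pt1E e eqxx; apply.
    by [].
  + rewrite fk' /= in k2; case/existsP: k2 => i /existsP [j /and4P [i0 j1 _ _]].
    rewrite Y2P => /andP[/forallP/(_ i)/forallP/(_ j)/implyP H _].
    move: (H (introT andP (conj i0 j1))) => /eqP E.
    have := congr1 val E; rewrite !pt1E => /val_inj/perm_inj/perm_inj ij.
    by move: i0 j1; rewrite ij => /eqP ->.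
- rewrite fk /= in k1; case/existsP: k1 => i0 /existsP [i1 /and4P [hi0 hi1 ms mt]].
  have mem : pt2 nl sg \in Y2 l sg.
    rewrite Y2P; apply/andP; split; apply/forallP => p; apply/forallP => q;
      apply/implyP => /andP[/eqP a /eqP b].
      by apply/eqP/val_inj; rewrite !pt2E !permK a b.
    by rewrite !pt2E !permK b /= leq_pred.
  rewrite fk in Hsub; move: (Hsub _ mem); case fk': (first_kind t s sg').
  + rewrite Y1P => H; case/existsP: fk' => j0 /andP[/eqP hj0 hv].
    have M := @mono_gen n (fun x => val (pt2 nl sg (sg' x))) 1.
    have := M (fun p q _ e => ltac:(move: H => /forallP/(_ p)/forallP/(_ q)/implyP;
                                    rewrite e eqxx; apply; by [])) j0 ((sg'^-1)%g (sg i0)).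
    rewrite hj0 => /(_ isT isT); rewrite !pt2E permKV permK (eqP hi0) /=.
    set y := (sg^-1)%g (sg' j0) => hy.
    have : (val y == val i0) || (val y == val i1).
      by move: hy; rewrite -[nat_of_ord y]/(val y) (eqP hi0) (eqP hi1); case: (val y) => [|[|m]].
    have sy : sg y = sg' j0 by rewrite /y permKV.
    case/orP; move/eqP/val_inj => E; move: hv; rewrite -sy E.
      by rewrite in_setI; move: ms; rewrite in_setD => /andP[/negbTE -> _].
    by rewrite in_setI; move: mt; rewrite in_setD => /andP[/negbTE -> _]; rewrite andbF.
  + rewrite fk' /= in k2; case/existsP: k2 => j0 /existsP [j1 /and4P [hj0 hj1 ms' mt']].
    rewrite Y2P => /andP[/forallP/(_ j0)/forallP/(_ j1)/implyP].
    rewrite hj0 hj1 => /(_ isT) /eqP Eq H.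
    set f := (sg' * sg^-1)%g.
    have fE : forall x, f x = (sg^-1)%g (sg' x) by move=> x; rewrite permM.
    have gE : forall x, val (pt2 nl sg (sg' x)) = (val (f x)).-1 by move=> x; rewrite pt2E fE.
    have M := @mono_gen n (fun x => val (pt2 nl sg (sg' x))) 2.
    have M' := M (fun p q hp e => ltac:(move: H => /forallP/(_ p)/forallP/(_ q)/implyP;
                                    rewrite e eqxx hp; apply; by [])).
    have low : forall k, (val (pt2 nl sg (sg' j1)) <= val (pt2 nl sg (sg' k)))%N.
      move=> k; case: (posnP (val k)) => hk.
        have -> : k = j0 by apply: val_inj; rewrite hk (eqP hj0).
        by rewrite Eq.
      by apply: M'; rewrite (eqP hj1).
    have g1 : (val (f j1)).-1 = 0%N.
      by have := low ((f^-1)%g i0); rewrite !gE permKV (eqP hi0) leqn0 => /eqP.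
    have g0 : (val (f j0)).-1 = 0%N by rewrite -gE Eq gE.
    have fj0 : f j0 = i0.
      apply: val_inj; rewrite (eqP hi0).
      have le : (val (f j0) <= 1)%N by move: g0; case: (val (f j0)) => [|[|m]].
      case: (posnP (val (f j0))) => // pos.
      have e1 : val (f j0) = val i1 by rewrite (eqP hi1); apply/eqP; rewrite eqn_leq le pos.
      have := val_inj e1; rewrite fE => /(congr1 sg); rewrite permKV => e2.
      by move: ms' mt; rewrite e2 !in_setD => /andP[/negbTE -> _] /andP[_].
    have pos : forall x : 'I_n, val x != 0%N -> (0 < val (f x))%N.
      move=> x; rewrite lt0n; apply: contra => /eqP e.
      have : f x = f j0 by apply: val_inj; rewrite fj0 e (eqP hi0).
      by move/perm_inj ->; rewrite hj0.
    move/negP: neq; apply; apply/eqP/perm_eq_of; rewrite -/f.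
    apply: perm_mono_id => p q e.
    case: (posnP (val p)) => hp.
      have -> : p = j0 by apply: val_inj; rewrite hp (eqP hj0).
      by rewrite fj0 (eqP hi0).
    apply: pred_mono; first exact: pos (lt0n_neq0 hp).
      by apply: pos; rewrite e.
    rewrite -!gE; apply: M'; first by rewrite ltnS.
    by rewrite e.
Qed.
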